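(* For all integers $n\ge 2$ and $1\le k<n$, the domination number of $H_B(n,k)$ is $\gamma(H_B(n,k))=\binom{n}{k}$.
   Context: Fix integers $n\ge 2$ and $1\le k<n$ and positive real numbers $x_1<x_2<\dots<x_n$. Let $\mathscr{B}_n=\{\pm x_1,\pm x_2,\dots,\pm x_{n-1},x_n\}$ (so $-x_n\notin\mathscr{B}_n$). Let $\phi(\mathscr{B}_n)$ be the family of all nonempty subsets $S\subseteq\mathscr{B}_n$ whose elements have pairwise distinct absolute values and whose element of largest absolute value is positive. Let $\mathscr{B}_n^+=\{x_1,\dots,x_n\}$, let $V_1$ be the set of all $k$-element subsets of $\mathscr{B}_n^+$, and let $V_2=\phi(\mathscr{B}_n)\setminus V_1$. For $A\in\phi(\mathscr{B}_n)$ put $A^\dagger=\{|a|:a\in A\}$. The bipartite Kneser B type-$k$ graph $H_B(n,k)$ is the simple graph with vertex set $V_1\cup V_2$ in which $X\in V_1$ and $Y\in V_2$ are adjacent if and only if $X\subseteq Y^\dagger$ or $Y^\dagger\subseteq X$, and there are no other edges. A dominating set is a set $S$ of vertices such that every vertex not in $S$ is adjacent to some vertex of $S$; the domination number is the minimum size of a dominating set. *)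

(* Defs.v *)
From mathcomp Require Import all_boot all_order.
Set Implicit Arguments. Unset Strict Implicit. Unset Printing Implicit Defensive.

(* Encoding: the signed element  (-1)^b * x_(i+1)  of {+-x_1,...,+-x_n} is the
   pair (i, b) : 'I_n * bool  (b = true means negative sign).  Since
   0 < x_1 < ... < x_n, this map is injective, |(-1)^b x_(i+1)| = x_(i+1)
   corresponds to the index i, and comparing absolute values is comparing
   indices.  Hence the graph below is isomorphic to H_B(n,k) for every such
   choice of reals. *)
Definition sgnelt (n : nat) := ('I_n * bool)%type.

Definition Bn (n : nat) : {set sgnelt n} :=
  [set p | ~~ (p.2 && (val p.1 == n.-1))].

Definition Bn_plus (n : nat) : {set sgnelt n} := [set p | ~~ p.2].

Definition phiB (n : nat) : {set {set sgnelt n}} :=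
  [set S : {set sgnelt n} |
    [&& S \subset Bn n, S != set0,
        [forall p in S, forall q in S, (p.1 == q.1) ==> (p == q)] &
        [forall p in S, [forall q in S, (q.1 <= p.1)%N] ==> ~~ p.2]]].

Definition dagger (n : nat) (S : {set sgnelt n}) : {set 'I_n} := [set p.1 | p in S].

Definition V1 (n k : nat) : {set {set sgnelt n}} :=
  [set S : {set sgnelt n} | (S \subset Bn_plus n) && (#|S| == k)].

Definition V2 (n k : nat) : {set {set sgnelt n}} := phiB n :\: V1 n k.

Definition HB_vertices (n k : nat) : {set {set sgnelt n}} := V1 n k :|: V2 n k.

Definition HB_adj (n k : nat) (X Y : {set sgnelt n}) : bool :=
  let e A B := [&& A \in V1 n k, B \in V2 n k &
                   (dagger A \subset dagger B) || (dagger B \subset dagger A)] in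
  e X Y || e Y X.

Definition dominating (T : finType) (V : {set T}) (adj : rel T) (D : {set T}) : bool :=
  (D \subset V) && [forall v in V, (v \notin D) ==> [exists u in D, adj u v]].

Definition is_domination_number (T : finType) (V : {set T}) (adj : rel T) (g : nat) : Prop :=
  (exists D : {set T}, dominating V adj D /\ #|D| = g) /\
  (forall D : {set T}, dominating V adj D -> g <= #|D|).

Arguments dagger n S : clear implicits.
Arguments HB_adj n k X Y : clear implicits.

(* Main.v *)
Require Import Defs.
From mathcomp Require Import all_boot all_order zify.
Set Implicit Arguments. Unset Strict Implicit. Unset Printing Implicit Defensive.

Section S.
Variable n : nat.

Definition pos (A : {set 'I_n}) : {set sgnelt n} := [set (i, false) | i in A].

Lemma in_pos A (p : sgnelt n) : (p \in pos A) = (p.1 \in A) && ~~ p.2.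
Proof.
case: p => i b /=; apply/imsetP/andP => [[j jA [-> ->]]|[iA]] //.
by case: b => // _; exists i.
Qed.

Lemma pos_inj : injective pos.
Proof.
move=> A B e; apply/setP => i.
by have := in_pos A (i, false); rewrite e in_pos /= !andbT.
Qed.

Lemma card_pos A : #|pos A| = #|A|.
Proof. by apply: card_imset => i j [->]. Qed.

Lemma in_dagger (S : {set sgnelt n}) i : (i \in dagger n S) = [exists b, (i, b) \in S].
Proof.
apply/imsetP/existsP => [[[j b] jS /= ->]|[b bS]]; first by exists b.
by exists (i, b).
Qed.

Lemma dagger_pos A : dagger n (pos A) = A.
Proof.
apply/setP => i; rewrite in_dagger; apply/existsP/idP => [[b]|iA].
  by rewrite in_pos => /andP[].
by exists false; rewrite in_pos /= iA.
Qed.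

Lemma pos_dagger (S : {set sgnelt n}) : S \subset Bn_plus n -> S = pos (dagger n S).
Proof.
move=> /subsetP sub; apply/setP => [[i b]]; rewrite in_pos /= in_dagger.
apply/idP/idP => [iS|/andP[/existsP[c cS] nb]].
  have := sub _ iS; rewrite inE /= => ->; rewrite andbT; apply/existsP; by exists b.
have := sub _ cS; rewrite inE /=. by case: c cS; case: b nb.
Qed.

Lemma V1P S k : reflect (exists A : {set 'I_n}, S = pos A /\ #|A| = k) (S \in V1 n k).
Proof.
rewrite inE; apply: (iffP andP) => [[sub /eqP cS]|[A [-> cA]]].
  exists (dagger n S); split; first exact: pos_dagger.
  by rewrite -cS {2}(pos_dagger sub) card_pos.
split; last by rewrite card_pos cA.
by apply/subsetP => p; rewrite in_pos inE => /andP[].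
Qed.

Lemma V1_eq k : V1 n k = pos @: [set A : {set 'I_n} | #|A| == k].
Proof.
apply/setP => S; apply/V1P/imsetP => [[A [-> cA]]|[A]]; first by exists A; rewrite ?inE ?cA.
by rewrite inE => /eqP cA ->; exists A.
Qed.

Lemma card_V1 k : #|V1 n k| = 'C(n, k).
Proof.
rewrite V1_eq card_imset; last exact: pos_inj.
by rewrite card_draws card_ord.
Qed.

Lemma V1V2 k S : S \in V1 n k -> S \in V2 n k -> False.
Proof. by move=> h; rewrite inE h. Qed.

Lemma adj_V2 k u Y : Y \in V2 n k -> HB_adj n k u Y ->
  u \in V1 n k /\ (dagger n u \subset dagger n Y) || (dagger n Y \subset dagger n u).
Proof.
move=> YV2; rewrite /HB_adj => /orP[/and3P[-> _ h]//|/and3P[YV1]].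
by case: (V1V2 YV1 YV2).
Qed.

Lemma adj_V1 k u X : X \in V1 n k -> HB_adj n k u X -> u \in V2 n k.
Proof.
move=> XV1; rewrite /HB_adj => /orP[/and3P[_ XV2]|/and3P[_ ->]] //.
by case: (V1V2 XV1 XV2).
Qed.

End S.

Lemma sub_card (T : finType) (I : {set T}) m : m <= #|I| ->
  exists A : {set T}, A \subset I /\ #|A| = m.
Proof.
move=> le; exists [set x in take m (enum I)]; split.
  by apply/subsetP => x; rewrite inE => /mem_take; rewrite mem_enum.
rewrite cardsE; have /card_uniqP -> := take_uniq m (enum_uniq (mem I)).
by rewrite size_take -cardE; case: ltngtP le => //= ->.
Qed.

Lemma kset (T : finType) (I : {set T}) k : k <= #|T| ->
  exists A : {set T}, #|A| = k /\ ((A \subset I) || (I \subset A)).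
Proof.
move=> kT; case: (leqP k #|I|) => h.
  by have [A [s c]] := sub_card h; exists A; rewrite s.
have : k - #|I| <= #|~: I| by have := cardsC I; lia.
move=> /sub_card [B [sB cB]]; exists (I :|: B); split.
  rewrite cardsU cB.
  have -> : I :&: B = set0.
    apply/setP => x; rewrite !inE; apply/andP => [[xI xB]].
    by have := subsetP sB x xB; rewrite inE xI.
  by rewrite cards0 subn0 subnKC // ltnW.
by rewrite subsetUl orbT.
Qed.

Lemma upper n k (hk : k < n) : dominating (HB_vertices n k) (HB_adj n k) (V1 n k).
Proof.
apply/andP; split; first by rewrite subsetUl.
apply/forall_inP => Y; rewrite inE => /orP[->//|YV2]; apply/implyP => _.
have kn : k <= #|'I_n| by rewrite card_ord ltnW.
have [A [cA h]] := kset (dagger n Y) kn.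
have PV : pos A \in V1 n k by apply/V1P; exists A.
apply/exists_inP; exists (pos A) => //.
by rewrite /HB_adj PV YV2 dagger_pos h.
Qed.

Section S.
Variable n : nat.

Definition priv (A : {set 'I_n}) : {set sgnelt n} :=
  [set p : sgnelt n | (p.1 \in A) && (p.2 == [forall j in A, (p.1 <= j)%N])].

Lemma in_priv A p : (p \in priv A) = (p.1 \in A) && (p.2 == [forall j in A, (p.1 <= j)%N]).
Proof. by rewrite inE. Qed.

Lemma dagger_priv A : dagger n (priv A) = A.
Proof.
apply/setP => i; rewrite in_dagger; apply/existsP/idP => [[b]|iA].
  by rewrite in_priv => /andP[].
by exists [forall j in A, (i <= j)%N]; rewrite in_priv /= iA eqxx.
Qed.

Lemma other (A : {set 'I_n}) i : 2 <= #|A| -> exists2 j, j \in A & j != i.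
Proof.
move=> h; have : 0 < #|A :\ i|.
  by move: (cardsD1 i A); case: (i \in A) => /= e; rewrite e in h; lia.
by case/card_gt0P => j; rewrite !inE => /andP[]; exists j.
Qed.

Lemma priv_V2 k (A : {set 'I_n}) : 2 <= #|A| -> #|A| = k -> priv A \in V2 n k.
Proof.
move=> h2 cA.
have [i0 i0A] : exists i0, i0 \in A by apply/card_gt0P; lia.
case: (arg_minnP (fun i : 'I_n => i : nat) i0A) => m mA mmin.
have mP : (m, true) \in priv A.
  rewrite in_priv /= (mA : m \in A) /=; apply/eqP; symmetry; apply/forall_inP => j; exact: mmin.
rewrite inE; apply/andP; split.
  apply/negP => /V1P [B [e _]]; move: mP; rewrite e in_pos /=; by rewrite andbF.
rewrite inE; apply/and4P; split.
- apply/subsetP => [[i b]]; rewrite in_priv inE /= => /andP[iA /eqP ->].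
  apply/negP => /andP[/forall_inP mi /eqP ein].
  have [j jA ji] := other i h2.
  have := mi j jA; have := ltn_ord j; move: ji; rewrite -val_eqE /=; lia.
- by apply/set0Pn; exists (m, true).
- apply/forall_inP => [[i b]]; rewrite in_priv /= => /andP[_ /eqP ->].
  apply/forall_inP => [[i' b']]; rewrite in_priv /= => /andP[_ /eqP ->].
  by apply/implyP => /eqP ->.
- apply/forall_inP => [[i b]]; rewrite in_priv /= => /andP[iA /eqP ->].
  apply/implyP => /forall_inP mx; apply/negP => /forall_inP mi.
  have [j jA ji] := other i h2.
  have := mi j jA.
  have jP : (j, [forall l in A, (j <= l)%N]) \in priv A by rewrite in_priv /= jA eqxx.
  have := mx _ jP; move: ji; rewrite -val_eqE /=; lia.
Qed.

Lemma adj_pos k (A : {set 'I_n}) X : #|A| = k -> X \in V1 n k ->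
  (dagger n X \subset A) || (A \subset dagger n X) -> X = pos A.
Proof.
move=> cA /V1P [B [-> cB]]; rewrite dagger_pos => h.
congr pos; apply/eqP; case/orP: h => h.
  by rewrite eqEcard h cA cB /= leqnn.
by rewrite eq_sym eqEcard h cA cB /= leqnn.
Qed.

Lemma lower2 k (D : {set {set sgnelt n}}) : 2 <= k ->
  dominating (HB_vertices n k) (HB_adj n k) D -> 'C(n, k) <= #|D|.
Proof.
move=> k2 /andP[_ /forall_inP dom].
pose K := [set A : {set 'I_n} | #|A| == k].
pose g A := if pos A \in D then pos A else priv A.
have gD : forall A, A \in K -> g A \in D.
  move=> A; rewrite inE => /eqP cA; rewrite /g; case: ifP => // pD.
  have PV := priv_V2 (ltac:(lia) : 2 <= #|A|) cA.
  have := dom (priv A) (ltac:(by rewrite inE PV orbT)); case: (priv A \in D) => //= /exists_inP [u uD uadj].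
  have [uV1 hh] := adj_V2 PV uadj.
  move: hh; rewrite dagger_priv => hh.
  by move: uD; rewrite (adj_pos cA uV1 hh) pD.
have ginj : {in K &, injective g}.
  move=> A B; rewrite !inE => /eqP cA /eqP cB; rewrite /g.
  have PA : pos A \in V1 n k by apply/V1P; exists A.
  have PB : pos B \in V1 n k by apply/V1P; exists B.
  have QA := priv_V2 (ltac:(lia) : 2 <= #|A|) cA.
  have QB := priv_V2 (ltac:(lia) : 2 <= #|B|) cB.
  case: ifP => _; case: ifP => _.
  - exact: pos_inj.
  - by move=> e; case: (V1V2 PA); rewrite e.
  - by move=> e; case: (V1V2 PB); rewrite -e.
  - by move=> e; rewrite -(dagger_priv A) e dagger_priv.
have -> : 'C(n, k) = #|K| by rewrite card_draws card_ord.
rewrite -(card_in_imset ginj).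
apply: subset_leq_card; apply/subsetP => x /imsetP [A AK ->]; exact: gD.
Qed.

End S.

Section S.
Variable n : nat.

Definition pr (i j : 'I_n) : {set sgnelt n} := [set (i, (i < j)%N); (j, false)].

Lemma dagger_pr i j : dagger n (pr i j) = [set i; j].
Proof.
apply/setP => x; rewrite in_dagger !inE; apply/existsP/idP => [[b]|].
  by rewrite !inE !xpair_eqE => /orP[/andP[-> _]|/andP[-> _]]; rewrite ?orbT.
case/orP => /eqP ->; [exists (i < j)%N | exists false]; by rewrite !inE eqxx ?orbT.
Qed.

Lemma pr_V2 i j : i != j -> pr i j \in V2 n 1.
Proof.
move=> ij.
have ne : (i, (i < j)%N) != (j, false) by rewrite xpair_eqE (negbTE ij).
rewrite inE; apply/andP; split.
  by rewrite inE cards2 ne andbF.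
rewrite inE; apply/and4P; split.
- apply/subsetP => p; rewrite !inE => /orP[]/eqP -> //=.
  apply/negP => /andP[lt /eqP e]; have := ltn_ord j; lia.
- by apply/set0Pn; exists (j, false); rewrite !inE eqxx orbT.
- apply/forall_inP => p; rewrite !inE => /orP[]/eqP ->;
  apply/forall_inP => q; rewrite !inE => /orP[]/eqP -> //=;
  first [by rewrite !eqxx | by apply/implyP => /eqP e; move: ij; rewrite e eqxx].

- apply/forall_inP => p; rewrite !inE => /orP[]/eqP -> /=; rewrite ?implybT //.
  apply/implyP => /forall_inP mx; apply/negP => lt.
  have := mx (j, false); rewrite !inE eqxx orbT /= => /(_ isT); lia.
Qed.

Lemma pr_inj i1 j1 i2 j2 : i1 != j1 -> i2 != j2 -> pr i1 j1 = pr i2 j2 -> i1 = i2.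
Proof.
move=> n1 n2 e.
have h1 : (i1, (i1 < j1)%N) \in pr i2 j2 by rewrite -e !inE eqxx.
have h2 : (i2, (i2 < j2)%N) \in pr i1 j1 by rewrite e !inE eqxx.
move: h1 h2; rewrite !inE !xpair_eqE.
move=> h1 h2; apply: val_inj; move: n1 n2 h1 h2; rewrite -!val_eqE /=.
lia.
Qed.

Lemma adj_pr i j u : i != j -> pr i j \in V2 n 1 -> HB_adj n 1 u (pr i j) ->
  (u = pos [set i]) \/ (u = pos [set j]).
Proof.
move=> ij PV /(adj_V2 PV) [/V1P [B [-> cB]]]; rewrite dagger_pos dagger_pr => h.
have [x Bx] : exists x, B = [set x] by apply/cards1P; rewrite cB.
move: h; rewrite Bx => /orP[]; last first.
  move/subset_leq_card; rewrite cards1 cards2 ij //.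
rewrite sub1set !inE => /orP[]/eqP ->; by [left|right].
Qed.

Lemma lower1 (D : {set {set sgnelt n}}) :
  dominating (HB_vertices n 1) (HB_adj n 1) D -> 'C(n, 1) <= #|D|.
Proof.
move=> /andP[_ /forall_inP dom].
have PV : forall i : 'I_n, pos [set i] \in V1 n 1.
  by move=> i; apply/V1P; exists [set i]; rewrite cards1.
pose h (i : 'I_n) := let X := pos [set i] in if X \in D then X else
  match [pick j | (j != i) && (pos [set j] \notin D)] with
  | Some j => pr i j
  | None => odflt X [pick u | (u \in D) && HB_adj n 1 u X] end.
have hD : forall i, h i \in D.
  move=> i; rewrite /h /=; case: ifP => // XD.
  case: pickP => [j /andP[ji jD]|none].
    have ij : i != j by rewrite eq_sym.
    have QV := pr_V2 ij.
    have := dom (pr i j) (ltac:(by rewrite inE QV orbT)).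
    case: (pr i j \in D) => //= /exists_inP [u uD uadj].
    by case: (adj_pr ij QV uadj) => e; move: uD; rewrite e ?XD // (negbTE jD).
  case: pickP => [u /andP[]//|none2].
  have := dom (pos [set i]) (ltac:(by rewrite inE PV)).
  rewrite XD /= => /exists_inP [u uD uadj].
  by have := none2 u; rewrite uD uadj.
have hV : forall i, pos [set i] \notin D -> h i \in V2 n 1.
  move=> i XD; rewrite /h /= (negbTE XD).
  case: pickP => [j /andP[ji jD]|none]; first by apply: pr_V2; rewrite eq_sym.
  case: pickP => [u /andP[_ uadj]|none2]; first exact: adj_V1 (PV i) uadj.
  have := dom (pos [set i]) (ltac:(by rewrite inE PV)).
  rewrite (negbTE XD) /= => /exists_inP [u uD uadj].
  by have := none2 u; rewrite uD uadj.
have hinj : injective h.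
  move=> i1 i2 e.
  have hp : forall i, pos [set i] \in D -> h i = pos [set i] by move=> i Di; rewrite /h /= Di.
  case D1: (pos [set i1] \in D); case D2: (pos [set i2] \in D).
  - move: e; rewrite !hp // => /pos_inj /setP/(_ i1); rewrite !inE eqxx => /esym/eqP. done.
  - have := hV i2 (negbT D2); rewrite -e hp // => H; case: (V1V2 (PV i1) H).
  - have := hV i1 (negbT D1); rewrite e hp // => H; case: (V1V2 (PV i2) H).
  - move: e; rewrite /h /= D1 D2.
  - case: pickP => [j1 /andP[j1i1 j1D]|none1]; last first.
      move=> _; apply/eqP; apply: contraT => ne.
      by have := none1 i2; rewrite eq_sym ne D2.
    case: pickP => [j2 /andP[j2i2 j2D]|none2]; last first.
      move=> _; apply/eqP; apply: contraT => ne.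
      by have := none2 i1; rewrite ne D1.
    by apply: pr_inj; rewrite eq_sym.
rewrite bin1 -{1}(card_ord n) -(card_imset _ hinj).
apply: subset_leq_card; apply/subsetP => x /imsetP [i _ ->]; exact: hD.
Qed.
End S.

Theorem mainTheorem4 (n k : nat) (hn : 2 <= n) (hk1 : 1 <= k) (hkn : k < n) :
  is_domination_number (HB_vertices n k) (HB_adj n k) 'C(n, k).
Proof.
split.
  by exists (V1 n k); split; [exact: upper | exact: card_V1].
move=> D dom; case: (ltngtP k 1) => [|k2|e]; first by rewrite ltnNge hk1.
  exact: lower2 k2 dom.
by subst k; exact: lower1 dom.
Qed.
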